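(* Let $I_A$ and $I_B$ be two MatP instances with the same underlying graph $G=(W\cup F,E)$ that differ only in the preference order of a single agent $x$, let $e=\{x,y\}\in E$, and let $I_H$ be a hybrid instance of $(I_A,I_B)$ with respect to $e$. Then: (1) there exists a robust popular matching with respect to $I_A$ and $I_B$ containing $e$ if and only if there exists a popular matching for $I_H$ containing $e$; (2) there exists a robust dominant matching with respect to $I_A$ and $I_B$ containing $e$ if and only if there exists a dominant matching for $I_H$ containing $e$.
   Context: An instance $I$ of matchings under preferences (MatP) consists of a bipartite graph $G^I=(W\cup F,E^I)$ with disjoint finite vertex sets $W$ (workers) and $F$ (firms), whose elements are called agents, together with, for each agent $x$, a strict linear order $\succ_x^I$ (preference order) over the set $N_x^I$ of neighbors of $x$ in $G^I$. A matching is a set of pairwise disjoint edges; $M(x)$ denotes the partner of a matched agent $x$. Agent $x$ prefers $M$ over $M'$ if $x$ is matched in $M$ and unmatched in $M'$, or matched in both with $M(x)\succ_x M'(x)$. Define $\mathrm{vote}^I_x(M,M')=1$ if $x$ prefers $M$ over $M'$, $-1$ if $x$ prefers $M'$ over $M$, and $0$ otherwise, and the popularity margin $\phi^I(M,M')=\sum_{x\in W\cup F}\mathrm{vote}^I_x(M,M')$. A matching $M$ of $G^I$ is popular for $I$ if $\phi^I(M,M')\ge 0$ for every matching $M'$ of $G^I$; it is dominant for $I$ if it is popular and $\phi^I(M,M')>0$ for every matching $M'$ of $G^I$ with $|M'|>|M|$. For two instances $I_A,I_B$ on the same agent sets, a matching is robust popular (resp. robust dominant) with respect to $I_A$ and $I_B$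 if it is popular (resp. dominant) for both $I_A$ and $I_B$. Hybrid instance: suppose $I_A,I_B$ have the same graph $G$ and differ only in the preferences of agent $x$, and let $e=\{x,y\}\in E$. Let $P^A=\{z: z\succ_x^{I_A} y\}$ and $P^B=\{z: z\succ_x^{I_B} y\}$. A hybrid instance $I_H$ of $(I_A,I_B)$ with respect to $e$ is the MatP instance on $G$ in which every agent $z\neq x$ has preference order $\succ_z^{I_A}$, and $x$ has any linear order $\succ'$ on $N_x$ such that $z\succ' y$ for all $z\in P^A\cup P^B$ and $y\succ' z$ for all $z\in N_x\setminus(P^A\cup P^B\cup\{y\})$. *)

(* Defs.v *)
From mathcomp Require Import all_boot all_order all_algebra.
Import GRing.Theory Num.Theory.
Local Open Scope ring_scope.
Set Implicit Arguments. Unset Strict Implicit. Unset Printing Implicit Defensive.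

(* Agents: a finite type V partitioned into workers (isW) and firms (~~ isW).  An edge {u,v} is represented as the 2-set [set u; v]. *)

Section MatP.
Variable V : finType.

Definition bipartite_graph (isW : pred V) (adj : rel V) : Prop :=
  (forall u v, adj u v -> adj v u) /\ (forall u v, adj u v -> isW u != isW v).

(* preference profile: pref x a b  means  a >_x b *)
Definition pref_profile := V -> rel V.

Definition strict_linear_on (N : pred V) (r : rel V) : Prop :=
  [/\ (forall a, N a -> ~~ r a a),
      (forall a b c, N a -> N b -> N c -> r a b -> r b c -> r a c),
      (forall a b, N a -> N b -> a != b -> r a b || r b a)
    & (forall a b, r a b -> N a /\ N b)].

Definition valid_prefs (adj : rel V) (p : pref_profile) : Prop :=
  forall x, strict_linear_on (adj x) (p x).

Definition is_matching (adj : rel V) (M : {set {set V}}) : Prop :=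
  (forall e, e \in M -> exists u v, [/\ adj u v, u != v & e = [set u; v]]) /\
  (forall e f, e \in M -> f \in M -> e != f -> [disjoint e & f]).

Definition partner (M : {set {set V}}) (x : V) : option V :=
  [pick y | [set x; y] \in M & y != x].

Definition prefers (p : pref_profile) (x : V) (M M' : {set {set V}}) : bool :=
  match partner M x, partner M' x with
  | Some y, None => true
  | Some y, Some y' => p x y y'
  | _, _ => false
  end.

Definition vote (p : pref_profile) (x : V) (M M' : {set {set V}}) : int :=
  if prefers p x M M' then (1 : int) else if prefers p x M' M then (-1 : int) else (0 : int).

Definition phi (p : pref_profile) (M M' : {set {set V}}) : int :=
  foldr (fun x s => (vote p x M M' + s)%R) 0%R (enum V).

Definition popular (adj : rel V) (p : pref_profile) (M : {set {set V}}) : Prop :=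
  is_matching adj M /\
  forall M', is_matching adj M' -> (0 <= phi p M M')%R.

Definition dominant (adj : rel V) (p : pref_profile) (M : {set {set V}}) : Prop :=
  popular adj p M /\
  forall M', is_matching adj M' -> (#|M| < #|M'|)%N -> (0 < phi p M M')%R.

Definition hybrid (adj : rel V) (pA pB pH : pref_profile) (x y : V) : Prop :=
  valid_prefs adj pH /\
  (forall z, z != x -> pH z =2 pA z) /\
  (forall z, adj x z -> (pA x z y || pB x z y) -> pH x z y) /\
  (forall z, adj x z -> z != y -> ~~ (pA x z y || pB x z y) -> pH x y z).

End MatP.

(* Main.v *)
Require Import Defs.
From mathcomp Require Import all_boot all_order all_algebra.
Import GRing.Theory Num.Theory Order.TTheory.

Section Aux.
Variable V : finType.
Implicit Types (p q : pref_profile V) (M : {set {set V}}).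

Lemma prefers_ext p q z M M' : p z =2 q z -> prefers p z M M' = prefers q z M M'.
Proof.
move=> E; rewrite /prefers; case: (partner M z) => [a|]; case: (partner M' z) => [b|] //.
Qed.

Lemma vote_ext p q z M M' : p z =2 q z -> vote p z M M' = vote q z M M'.
Proof. by move=> E; rewrite /vote !(@prefers_ext p q z _ _ E). Qed.

Lemma phi_le p q M M' : (forall z, (vote p z M M' <= vote q z M M')%R) ->
  (phi p M M' <= phi q M M')%R.
Proof. move=> H; rewrite /phi; elim: (enum V) => //= a s IH; exact: lerD. Qed.

Lemma phi_eq p q M M' : (forall z, vote p z M M' = vote q z M M') ->
  phi p M M' = phi q M M'.
Proof. move=> H; rewrite /phi; elim: (enum V) => //= a s ->; by rewrite H. Qed.

Lemma partner_in (adj : rel V) M x y : is_matching adj M -> [set x; y] \in M ->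
  x != y -> partner M x = Some y.
Proof.
move=> [_ Hd] Hin Hxy; rewrite /partner; case: pickP => [y0 /andP [Hin0 Hne]|H].
  case: (eqVneq [set x; y0] [set x; y]) => [E|Ne].
    have : y0 \in [set x; y] by rewrite -E set22.
    rewrite in_set2 => /orP [/eqP E'|/eqP ->] //.
    by rewrite E' eqxx in Hne.
  have := Hd _ _ Hin0 Hin Ne.
  by move/disjointFr => /(_ x (set21 _ _)); rewrite set21.
by move: (H y) => /=; rewrite Hin eq_sym Hxy.
Qed.

Lemma partner_adj (adj : rel V) M x y : (forall u v, adj u v -> adj v u) ->
  is_matching adj M -> partner M x = Some y -> adj x y.
Proof.
move=> Hs [Hm _]; rewrite /partner; case: pickP => // y0 /andP [Hin Hne] [<-].
have [u [v [Huv _ E]]] := Hm _ Hin.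
have : x \in [set u; v] by rewrite -E set21.
have : y0 \in [set u; v] by rewrite -E set22.
rewrite !in_set2 => /orP [/eqP Ey|/eqP Ey] /orP [/eqP Ex|/eqP Ex].
- by move: Hne; rewrite Ey Ex eqxx.
- by rewrite Ey Ex; apply: Hs.
- by rewrite Ey Ex.
- by move: Hne; rewrite Ey Ex eqxx.
Qed.

Lemma vote_x (adj : rel V) p M M' x y :
  strict_linear_on (adj x) (p x) -> partner M x = Some y -> adj x y ->
  (forall y', partner M' x = Some y' -> adj x y') ->
  vote p x M M' = (if partner M' x is Some y' then
     (if p x y' y then (-1)%R else if y' == y then 0%R else 1%R) else 1%R).
Proof.
move=> [irr tr tot _] PM axy PA; rewrite /vote /prefers PM.
case E: (partner M' x) => [y'|] //.
have ay := PA _ E.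
case: (eqVneq y' y) => [->|ny].
  by rewrite (negbTE (irr _ axy)).
have ny' : y != y' by rewrite eq_sym.
have := tot _ _ axy ay ny'.
case/orP => h.
  have h' : p x y' y = false.
    apply/negbTE/negP => h'; by move: (irr _ axy); rewrite (tr _ _ _ axy ay axy h h').
  by rewrite h h'.
have h' : p x y y' = false.
  apply/negbTE/negP => h'; by move: (irr _ axy); rewrite (tr _ _ _ axy ay axy h' h).
by rewrite h h'.
Qed.

End Aux.

Theorem corollary1 (V : finType) (isW : pred V) (adj : rel V)
  (pA pB pH : pref_profile V) (x y : V) :
  bipartite_graph isW adj ->
  valid_prefs adj pA -> valid_prefs adj pB ->
  (forall z, z != x -> pB z =2 pA z) ->
  adj x y ->
  hybrid adj pA pB pH x y ->
  ((exists M, [/\ popular adj pA M, popular adj pB M & [set x; y] \in M]) <->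
   (exists M, popular adj pH M /\ [set x; y] \in M)) /\
  ((exists M, [/\ dominant adj pA M, dominant adj pB M & [set x; y] \in M]) <->
   (exists M, dominant adj pH M /\ [set x; y] \in M)).
Proof.
move=> [Hsym Hbip] vA vB HBA Hxy [vH [HHA [H3 H4]]].
have xny : x != y by apply/eqP => E; move: (Hbip _ _ Hxy); rewrite E eqxx.
have key : forall M M', is_matching adj M -> is_matching adj M' -> [set x; y] \in M ->
  [/\ (phi pH M M' <= phi pA M M')%R, (phi pH M M' <= phi pB M M')%R &
      (phi pH M M' = phi pA M M' \/ phi pH M M' = phi pB M M')].
  move=> M M' HM HM' Hin.
  have PM := @partner_in V adj M x y HM Hin xny.
  have PA : forall y', partner M' x = Some y' -> adj x y'
    by move=> y'; exact: (@partner_adj V adj M' x y' Hsym HM').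
  have Hx : [&& (vote pH x M M' <= vote pA x M M')%R,
     (vote pH x M M' <= vote pB x M M')%R &
     ((vote pH x M M' == vote pA x M M') || (vote pH x M M' == vote pB x M M'))].
    rewrite (@vote_x V adj _ M M' x y (vH x) PM Hxy PA) (@vote_x V adj _ M M' x y (vA x) PM Hxy PA) (@vote_x V adj _ M M' x y (vB x) PM Hxy PA).
    case E: (partner M' x) => [y'|] //.
    have ay' := PA _ E.
    have hab : pH x y' y = pA x y' y || pB x y' y.
      case Hab: (pA x y' y || pB x y' y); first exact: H3.
      case: (vH x) => irr tr _ _.
      case: (eqVneq y' y) => [->|ny]; first by apply/negbTE; exact: irr.
      have h4 := H4 _ ay' ny (negbT Hab).
      apply/negbTE/negP => h; by move: (irr _ Hxy); rewrite (tr _ _ _ Hxy ay' Hxy h4 h).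
    rewrite hab; case: (pA x y' y); case: (pB x y' y) => //=; case: (y' == y) => //.
  case/and3P: Hx => h1 h2 h3.
  have eA : forall z, z != x -> vote pH z M M' = vote pA z M M'.
    by move=> z nz; apply: vote_ext; apply: HHA.
  have eB : forall z, z != x -> vote pB z M M' = vote pA z M M'.
    by move=> z nz; apply: vote_ext; apply: HBA.
  split.
  - apply: phi_le => z; case: (eqVneq z x) => [->|nz] //; by rewrite eA.
  - apply: phi_le => z; case: (eqVneq z x) => [->|nz] //; by rewrite eA // eB.
  - case/orP: h3 => /eqP h3; [left|right]; apply: phi_eq => z;
      case: (eqVneq z x) => [->|nz] //; by rewrite eA // ?eB.
have popeq : forall M : {set {set V}}, [set x; y] \in M ->
  (popular adj pA M /\ popular adj pB M) <-> popular adj pH M.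
  move=> M Hin; split.
    move=> [[HM PA] [_ PB]]; split => // M' HM'.
    by case: (key M M' HM HM' Hin) => _ _ [->|->]; [apply: PA | apply: PB].
  move=> [HM PH]; split; split => // M' HM'; case: (key M M' HM HM' Hin) => h1 h2 _.
    exact: le_trans (PH _ HM') h1.
  exact: le_trans (PH _ HM') h2.
have domeq : forall M : {set {set V}}, [set x; y] \in M ->
  (dominant adj pA M /\ dominant adj pB M) <-> dominant adj pH M.
  move=> M Hin; split.
    move=> [[PA DA] [PB DB]]; split; first by apply/popeq.
    move=> M' HM' lt; case: PA => HM _.
    by case: (key M M' HM HM' Hin) => _ _ [->|->]; [apply: DA | apply: DB].
  move=> [PH DH]; have [PA PB] := (proj2 (popeq M Hin) PH).
  case: PH => HM _.
  split; split => // M' HM' lt; case: (key M M' HM HM' Hin) => h1 h2 _.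
    exact: lt_le_trans (DH _ HM' lt) h1.
  exact: lt_le_trans (DH _ HM' lt) h2.
split; split.
- by move=> [M [PA PB Hin]]; exists M; split => //; apply/popeq.
- by move=> [M [PH Hin]]; have [] := proj2 (popeq M Hin) PH; exists M.
- by move=> [M [PA PB Hin]]; exists M; split => //; apply/domeq.
- by move=> [M [PH Hin]]; have [] := proj2 (domeq M Hin) PH; exists M.
Qed.
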